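(* Let $\mathcal X=\{1,\dots,J\}$, $\mathcal Y=\{1,\dots,K\}$, and let $\mathcal C_n\subset\mathcal X^n$ be a codebook of $M$ codewords, all of type $p_X$, used over a DMC $P_{\hat Y|X}$. Let $p_{\hat Y|X_1}$ be a conditional type such that $M\,|\mathcal T_{\mathbf x}(p_{\hat Y|X_1})|\ge 2|\mathcal T(p_{\hat Y})|$ for $\mathbf x$ of type $p_X$, where $p_{\hat Y}$ is the $\hat Y$-marginal of $p_X\times p_{\hat Y|X_1}$. Then there exist a codeword $\mathbf x_1\in\mathcal C_n$ and a joint type $p_{\hat YX_1X_2}$ on $\mathcal Y\times\mathcal X\times\mathcal X$ with $p_{\hat YX_1}=p_{\hat YX_2}$ such that $$\Pr\big[\exists\mathbf x_2\in\mathcal C_n\setminus\{\mathbf x_1\}:\ \hat p_{\hat{\mathbf y}\mathbf x_1\mathbf x_2}=p_{\hat YX_1X_2}\big]\ \ge\ \frac{1}{2(n+1)^{J^2K-1}}\Pr\big[\hat{\mathbf y}\in\mathcal T_{\mathbf x_1}(p_{\hat Y|X_1})\big],$$ where both probabilities are with respect to $\hat{\mathbf y}\sim P_{\hat Y|X}^n(\cdot|\mathbf x_1)$.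
   Context: The type of a sequence is its empirical distribution; $\hat p_{\hat{\mathbf y}\mathbf x_1\mathbf x_2}(k,j_1,j_2)=\frac1n|\{i:\hat y_i=k,x_{1,i}=j_1,x_{2,i}=j_2\}|$. The conditional type $\hat p_{\mathbf y|\mathbf x}(k|j)$ is $\hat p_{\mathbf x\mathbf y}(j,k)/\hat p_{\mathbf x}(j)$ if $\hat p_{\mathbf x}(j)>0$ and $1/K$ otherwise; $\mathcal T_{\mathbf x}(p_{\hat Y|X})=\{\hat{\mathbf y}:\hat p_{\hat{\mathbf y}|\mathbf x}=p_{\hat Y|X}\}$ and $\mathcal T(p_{\hat Y})$ is the set of sequences of type $p_{\hat Y}$. $P^n_{\hat Y|X}(\hat{\mathbf y}|\mathbf x)=\prod_i P_{\hat Y|X}(\hat y_i|x_i)$. *)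

(* Defs.v *)
From HB Require Import structures.
From mathcomp Require Import all_boot all_order all_algebra.
Set Implicit Arguments. Unset Strict Implicit. Unset Printing Implicit Defensive.
Import Order.TTheory GRing.Theory Num.Theory.
Local Open Scope ring_scope.

Section Types.
Variable R : realFieldType.

Definition ptype (n : nat) (A : finType) (x : {ffun 'I_n -> A}) : {ffun A -> R} :=
  [ffun a => #|[set i | x i == a]|%:R / n%:R].

Definition zip2 (n : nat) (A B : finType) (x : {ffun 'I_n -> A}) (y : {ffun 'I_n -> B})
  : {ffun 'I_n -> A * B} := [ffun i => (x i, y i)].
Definition zip3 (n : nat) (A B C : finType) (x : {ffun 'I_n -> A})
  (y : {ffun 'I_n -> B}) (z : {ffun 'I_n -> C}) : {ffun 'I_n -> A * B * C} :=
  [ffun i => (x i, y i, z i)].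

Definition condtype (n J K : nat) (x : {ffun 'I_n -> 'I_J}) (y : {ffun 'I_n -> 'I_K})
  : {ffun 'I_J * 'I_K -> R} :=
  [ffun jk => if 0 < ptype x jk.1 then ptype (zip2 x y) jk / ptype x jk.1
              else K%:R^-1].

Definition Tcond (n J K : nat) (x : {ffun 'I_n -> 'I_J}) (p : {ffun 'I_J * 'I_K -> R})
  : {set {ffun 'I_n -> 'I_K}} := [set y | condtype x y == p].

Definition Ttype (n : nat) (A : finType) (p : {ffun A -> R}) : {set {ffun 'I_n -> A}} :=
  [set y | ptype y == p].

Definition ymarg (J K : nat) (pX : {ffun 'I_J -> R}) (p : {ffun 'I_J * 'I_K -> R})
  : {ffun 'I_K -> R} := [ffun k => \sum_j pX j * p (j, k)].

Definition stochastic (J K : nat) (W : 'I_J -> 'I_K -> R) : Prop :=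
  (forall j k, 0 <= W j k) /\ (forall j, \sum_k W j k = 1).

Definition Pn (n J K : nat) (W : 'I_J -> 'I_K -> R) (x : {ffun 'I_n -> 'I_J})
  (y : {ffun 'I_n -> 'I_K}) : R := \prod_i W (x i) (y i).

Definition PrW (n J K : nat) (W : 'I_J -> 'I_K -> R) (x : {ffun 'I_n -> 'I_J})
  (E : pred {ffun 'I_n -> 'I_K}) : R := \sum_(y | E y) Pn W x y.

End Types.

(* Main.v *)
Require Import Defs.
From HB Require Import structures.
From mathcomp Require Import all_boot all_order all_algebra.
From mathcomp Require Import zify.
Set Implicit Arguments. Unset Strict Implicit. Unset Printing Implicit Defensive.
Import Order.TTheory GRing.Theory Num.Theory.
Local Open Scope ring_scope.

Definition cnt (n : nat) (A : finType) (z : {ffun 'I_n -> A}) (a : A) : nat :=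
  #|[set i | z i == a]|.

Lemma CM (n : nat) (A : finType) (z : 'I_n -> A) (P : pred 'I_n) :
  (\sum_(a : A) #|[set i | P i && (z i == a)]| = #|[set i | P i]|)%N.
Proof.
rewrite -sum1_card (partition_big z xpredT) //=.
apply: eq_bigr => a _; rewrite -sum1_card; apply: eq_bigl => i; by rewrite !inE.
Qed.

Lemma cnt_sum (n : nat) (A : finType) (z : {ffun 'I_n -> A}) :
  (\sum_a cnt z a = n)%N.
Proof.
have := CM z xpredT; rewrite /cnt /= => ->.
by rewrite (_ : [set i | true] = setT) ?cardsT ?card_ord //; apply/setP.
Qed.

Lemma cnt_le (n : nat) (A : finType) (z : {ffun 'I_n -> A}) a : (cnt z a < n.+1)%N.
Proof. by rewrite ltnS -{2}(card_ord n) max_card. Qed.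

Definition hvec (n : nat) (A : finType) (a0 : A) (z : {ffun 'I_n -> A})
  : {ffun {a : A | a != a0} -> 'I_n.+1} := [ffun a => inord (cnt z (val a))].

Lemma hvec_card (n : nat) (A : finType) (a0 : A) (X : finType) (D : {set X})
  (F : X -> {ffun 'I_n -> A}) :
  (#|[set hvec a0 (F y) | y in D]| <= n.+1 ^ #|A|.-1)%N.
Proof.
apply: leq_trans (max_card _) _.
by rewrite card_ffun card_ord card_sig cardC1.
Qed.

Section S.
Variable R : realFieldType.

Lemma ptypeE (n : nat) (A : finType) (z : {ffun 'I_n -> A}) a :
  ptype R z a = (cnt z a)%:R / n%:R.
Proof. by rewrite ffunE. Qed.

Lemma ptype_cnt (n : nat) (A : finType) (z z' : {ffun 'I_n -> A}) :
  (0 < n)%N -> ptype R z = ptype R z' -> forall a, cnt z a = cnt z' a.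
Proof.
move=> n0 H a; have := congr1 (fun f : {ffun A -> R} => f a * n%:R) H.
rewrite !ptypeE !divfK ?pnatr_eq0 -?lt0n // => /eqP.
by rewrite eqr_nat => /eqP.
Qed.

Lemma cnt_ptype (n : nat) (A : finType) (z z' : {ffun 'I_n -> A}) :
  (forall a, cnt z a = cnt z' a) -> ptype R z = ptype R z'.
Proof. by move=> H; apply/ffunP => a; rewrite !ptypeE H. Qed.

Lemma L0 (n J K : nat) (x : {ffun 'I_n -> 'I_J}) (y : {ffun 'I_n -> 'I_K}) j k :
  ptype R x j * condtype R x y (j, k) = ptype R (zip2 x y) (j, k).
Proof.
rewrite [condtype _ _ _ _]ffunE /=; case: ifP => H.
  by rewrite mulrC divfK // lt0r_neq0.
have c0 : cnt x j = 0%N.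
  apply/eqP; apply: contraFT H; rewrite -lt0n => H.
  have n0 : (0 < n)%N.
    move/card_gt0P: H => [i _]; exact: (leq_ltn_trans (leq0n _) (ltn_ord i)).
  by rewrite ptypeE divr_gt0 // ltr0n.
have c1 : cnt (zip2 x y) (j, k) = 0%N.
  apply/eqP; rewrite -leqn0 -c0; apply: subset_leq_card; apply/subsetP => i.
  by rewrite !inE ffunE xpair_eqE => /andP[].
by rewrite !ptypeE c0 c1 !mul0r.
Qed.

Lemma L1 (n J K : nat) (x x' : {ffun 'I_n -> 'I_J}) (y y' : {ffun 'I_n -> 'I_K}) :
  ptype R x = ptype R x' -> condtype R x y = condtype R x' y' ->
  ptype R (zip2 x y) = ptype R (zip2 x' y').
Proof. by move=> Hx Hc; apply/ffunP => [[j k]]; rewrite -!L0 Hx Hc. Qed.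

Lemma L2 (n J K : nat) (x : {ffun 'I_n -> 'I_J}) (y : {ffun 'I_n -> 'I_K}) :
  ymarg (ptype R x) (condtype R x y) = ptype R y.
Proof.
apply/ffunP => k; rewrite ffunE; under eq_bigr do rewrite L0.
under eq_bigr do rewrite ptypeE.
rewrite -mulr_suml -natr_sum ptypeE; congr (_%:R / _).
rewrite /cnt -(CM x (fun i => y i == k)); apply: eq_bigr => j _.
by apply: eq_card => i; rewrite !inE ffunE /= xpair_eqE andbC.
Qed.

Lemma M3a (n J K : nat) (y : {ffun 'I_n -> 'I_K}) (a b : {ffun 'I_n -> 'I_J}) k j :
  \sum_(j2 : 'I_J) ptype R (zip3 y a b) (k, j, j2) = ptype R (zip2 a y) (j, k).
Proof.
under eq_bigr do rewrite ptypeE.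
rewrite -mulr_suml -natr_sum ptypeE; congr (_%:R / _).
transitivity (\sum_(j2 : 'I_J) #|[set i | ((a i == j) && (y i == k)) && (b i == j2)]|)%N.
  apply: eq_bigr => j2 _; apply: eq_card => i; rewrite !inE !ffunE /= !xpair_eqE.
  by case: (y i == k); case: (a i == j); case: (b i == j2).
rewrite (CM b (fun i => (a i == j) && (y i == k))).
by apply: eq_card => i; rewrite !inE !ffunE /= !xpair_eqE.
Qed.

Lemma M3b (n J K : nat) (y : {ffun 'I_n -> 'I_K}) (a b : {ffun 'I_n -> 'I_J}) k j :
  \sum_(j1 : 'I_J) ptype R (zip3 y a b) (k, j1, j) = ptype R (zip2 b y) (j, k).
Proof.
under eq_bigr do rewrite ptypeE.
rewrite -mulr_suml -natr_sum ptypeE; congr (_%:R / _).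
transitivity (\sum_(j1 : 'I_J) #|[set i | ((b i == j) && (y i == k)) && (a i == j1)]|)%N.
  apply: eq_bigr => j1 _; apply: eq_card => i; rewrite !inE !ffunE /= !xpair_eqE.
  by case: (y i == k); case: (a i == j1); case: (b i == j).
rewrite (CM a (fun i => (b i == j) && (y i == k))).
by apply: eq_card => i; rewrite !inE !ffunE /= !xpair_eqE.
Qed.

Lemma PnE (n J K : nat) (W : 'I_J -> 'I_K -> R) (x : {ffun 'I_n -> 'I_J})
  (y : {ffun 'I_n -> 'I_K}) :
  Pn W x y = \prod_(ab : 'I_J * 'I_K) W ab.1 ab.2 ^+ cnt (zip2 x y) ab.
Proof.
rewrite /Pn (partition_big (zip2 x y) xpredT) //; apply: eq_bigr => [[j k]] _.
rewrite -prodr_const; apply: eq_big => i; first by rewrite !inE.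
by rewrite ffunE => /eqP [-> ->].
Qed.


Lemma hvec_ptype (n : nat) (A : finType) (a0 : A) (z z' : {ffun 'I_n -> A}) :
  hvec a0 z = hvec a0 z' -> ptype R z = ptype R z'.
Proof.
move=> E; apply: cnt_ptype.
have Hne : forall a, a != a0 -> cnt z a = cnt z' a.
  move=> a Ha.
  have := congr1 (fun f : {ffun {a : A | a != a0} -> 'I_n.+1} => nat_of_ord (f (exist _ a Ha))) E.
  by rewrite /= !ffunE /= !inordK // cnt_le.
move=> a; case: (eqVneq a a0) => [->|Ha]; last exact: Hne.
have s1 := cnt_sum z; have s2 := cnt_sum z'.
rewrite (bigD1 a0) //= in s1; rewrite (bigD1 a0) //= in s2.
have e : (\sum_(a | a != a0) cnt z a = \sum_(a | a != a0) cnt z' a)%N.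
  by apply: eq_bigr.
lia.
Qed.

Lemma Pn_const (n J K : nat) (W : 'I_J -> 'I_K -> R) (x : {ffun 'I_n -> 'I_J})
  (y y' : {ffun 'I_n -> 'I_K}) : (0 < n)%N ->
  condtype R x y = condtype R x y' -> Pn W x y = Pn W x y'.
Proof.
move=> n0 H; rewrite !PnE; apply: eq_bigr => ab _.
by rewrite (ptype_cnt n0 (L1 (erefl _) H)).
Qed.

End S.

Theorem lemma2 (R : realFieldType) (J K n M : nat)
  (W : 'I_J -> 'I_K -> R)
  (C : {set {ffun 'I_n -> 'I_J}})
  (pX : {ffun 'I_J -> R})
  (pYX1 : {ffun 'I_J * 'I_K -> R}) :
  (0 < J)%N -> (0 < K)%N -> (0 < n)%N ->
  stochastic W ->
  #|C| = M ->
  (forall x, x \in C -> ptype R x = pX) ->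
  (* p_{Y|X1} is a conditional type for sequences of type p_X *)
  (exists (x : {ffun 'I_n -> 'I_J}) (y : {ffun 'I_n -> 'I_K}),
      ptype R x = pX /\ condtype R x y = pYX1) ->
  (forall x : {ffun 'I_n -> 'I_J}, ptype R x = pX ->
      (M * #|Tcond x pYX1| >= 2 * #|Ttype n (ymarg pX pYX1)|)%N) ->
  exists x1, x1 \in C /\
  exists p : {ffun 'I_K * 'I_J * 'I_J -> R},
    (* p is a joint type (of length-n sequences) on Y x X x X *)
    (exists (y : {ffun 'I_n -> 'I_K}) (a b : {ffun 'I_n -> 'I_J}),
        ptype R (zip3 y a b) = p) /\
    (* p_{Y X1} = p_{Y X2} *)
    (forall k j, \sum_(j2 : 'I_J) p (k, j, j2) = \sum_(j1 : 'I_J) p (k, j1, j)) /\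
    PrW W x1 (fun y => [exists x2 in C :\ x1, ptype R (zip3 y x1 x2) == p])
      >= ((2 * (n + 1) ^ (J ^ 2 * K - 1))%N%:R)^-1
         * PrW W x1 (fun y => y \in Tcond x1 pYX1).
Proof.
move=> J0 K0 n0 [W0 W1] HM HC [x0 [y0 [Hx0 Hy0]]] Hsz.
set S := Ttype n (ymarg pX pYX1).
have TS : forall x, ptype R x = pX -> forall y, y \in Tcond x pYX1 -> y \in S.
  move=> x Hx y; rewrite inE => /eqP Hy; by rewrite inE -Hx -Hy L2.
have S0 : (0 < #|S|)%N.
  by apply/card_gt0P; exists y0; apply: (TS x0 Hx0); rewrite inE Hy0.
have M0 : (0 < M)%N.
  have := Hsz x0 Hx0; rewrite lt0n; apply: contraTneq => ->; rewrite mul0n leqn0 muln_eq0 negb_or /= -lt0n; exact: S0.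
pose E x := [set y | [exists x2 in C :\ x, y \in Tcond x2 pYX1]].
pose U x := Tcond x pYX1 :&: E x.
pose V x := Tcond x pYX1 :\: E x.
have sumV : (\sum_(x in C) #|V x| <= #|S|)%N.
  under eq_bigr do rewrite -sum1_card big_mkcond.
  rewrite exchange_big /=.
  apply: leq_trans (_ : _ <= \sum_y (if y \in S then 1 else 0))%N _; last first.
    by rewrite -big_mkcond sum1_card.
  apply: leq_sum => y _.
  case: (boolP [exists x in C, y \in V x]) => [/exists_inP [x1 x1C yV]| /exists_inPn none].
    have z0 : (\sum_(x in C | x != x1) (if y \in V x then 1 else 0) = 0)%N.
      apply: big1 => x /andP [xC xx1]; case: ifP => // yVx.
      move: yV; rewrite inE => /andP [+ _]; rewrite inE => /exists_inP []; exists x.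
        by rewrite !inE xx1.
      by move: yVx; rewrite inE => /andP [].
    rewrite (bigD1 x1) //= yV z0.
    have : y \in S.
      apply: (TS x1 (HC x1 x1C)); by move: yV; rewrite inE => /andP [].
    by move=> ->.
  by rewrite big1 // => x xC; rewrite (negbTE (none x xC)).
have sumT : (\sum_(x in C) #|Tcond x pYX1| <= \sum_(x in C) #|U x| + #|S|)%N.
  have -> : (\sum_(x in C) #|Tcond x pYX1| = \sum_(x in C) #|U x| + \sum_(x in C) #|V x|)%N.
    rewrite -big_split; apply: eq_bigr => x _; rewrite /U /V; symmetry; exact: cardsID.
  lia.
have sum2S : (2 * #|S| <= \sum_(x in C) #|Tcond x pYX1|)%N.
  have : (\sum_(x in C) (2 * #|S|) <= \sum_(x in C) (M * #|Tcond x pYX1|))%N.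
    by apply: leq_sum => x xC; apply: Hsz; apply: HC.
  by rewrite sum_nat_const -big_distrr /= HM leq_pmul2l.
have [x1 x1C Hx1] : exists2 x1, x1 \in C & (#|Tcond x1 pYX1| <= 2 * #|U x1|)%N.
  have [/exists_inP ok | /exists_inPn H] := boolP [exists x in C, (#|Tcond x pYX1| <= 2 * #|U x|)%N].
    exact: ok.
  exfalso.
  have : (\sum_(x in C) (#|U x| + #|U x| + 1) <= \sum_(x in C) #|Tcond x pYX1|)%N.
    by apply: leq_sum => x xC; have := H x xC; rewrite -ltnNge; lia.
  rewrite !big_split sum_nat_const /= HM muln1 => h.
  move: sumT sum2S h.
  set a := (\sum_(x in C) #|U x|)%N; set t := (\sum_(x in C) #|Tcond x pYX1|)%N.
  lia.
pose g y := odflt x1 [pick x2 in C :\ x1 | y \in Tcond x2 pYX1].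
have gP : forall y, y \in U x1 -> g y \in C :\ x1 /\ y \in Tcond (g y) pYX1.
  move=> y; rewrite inE => /andP [_]; rewrite inE => /exists_inP [x2 x2C yT].
  rewrite /g; case: pickP => [x /andP [xC yx]|/(_ x2)]; first by [].
  by rewrite x2C yT.
have UT : forall y, y \in U x1 -> y \in Tcond x1 pYX1.
  by move=> y; rewrite inE => /andP [].
pose a0 : 'I_K * 'I_J * 'I_J := (Ordinal K0, Ordinal J0, Ordinal J0).
pose z y := zip3 y x1 (g y).
pose H := [set hvec a0 (z y) | y in U x1].
have T0 : (0 < #|Tcond x1 pYX1|)%N.
  rewrite lt0n; apply/eqP => t0; have := Hsz x1 (HC x1 x1C); rewrite t0 muln0.
  rewrite leqn0 muln_eq0 /= => /eqP s0; move: S0; rewrite /S s0.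
  by [].
have [y1 y1U] : exists y1, y1 \in U x1.
  apply/card_gt0P; lia.
have H0 : (0 < #|H|)%N by apply/card_gt0P; exists (hvec a0 (z y1)); exact: imset_f.
pose F q := [set y in U x1 | hvec a0 (z y) == q].
have [qm qmH qmE] := eq_bigmax_cond (fun q => #|F q|) H0.
have UF : (#|U x1| <= #|H| * #|F qm|)%N.
  have -> : #|U x1| = (\sum_(q in H) #|F q|)%N.
    rewrite -sum1_card (partition_big (fun y => hvec a0 (z y)) (mem H)) /=.
      apply: eq_bigr => q _; rewrite -sum1_card; apply: eq_bigl => y; by rewrite !inE.
    by move=> y yU; exact: imset_f.
  rewrite -sum_nat_const -qmE; apply: leq_sum => q qH; exact: leq_bigmax_cond.
have Hb : (#|H| <= (n + 1) ^ (J ^ 2 * K - 1))%N.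
  have := hvec_card a0 (U x1) z; rewrite !card_prod !card_ord addn1.
  by rewrite (_ : (J ^ 2 * K - 1 = (K * J * J).-1)%N) // -mulnn; lia.
move/imsetP: qmH => [ym ymU qmE'].
exists x1; split => //; exists (ptype R (z ym)); split.
  by exists ym, x1, (g ym).
have [gC gT] := gP ym ymU.
split.
  have Hxx : ptype R x1 = ptype R (g ym).
    by rewrite HC // (HC (g ym)) //; move: gC; rewrite inE => /andP [].
  have Hcc : condtype R x1 ym = condtype R (g ym) ym.
    by move: (UT ym ymU) gT; rewrite !inE => /eqP -> /eqP ->.
  have e := L1 Hxx Hcc.
  move=> k j; rewrite /z (M3a R ym x1 (g ym) k j) (M3b R ym x1 (g ym) k j) e.
  reflexivity.
set c := Pn W x1 ym.
have Pc : forall y, y \in Tcond x1 pYX1 -> Pn W x1 y = c.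
  move=> y yT; rewrite /c; apply: (Pn_const _ n0).
  by move: yT (UT ym ymU); rewrite !inE => /eqP -> /eqP ->.
have c0 : 0 <= c by rewrite /c /Pn; apply: prodr_ge0 => i _; apply: W0.
have PT : PrW W x1 (fun y => y \in Tcond x1 pYX1) = #|Tcond x1 pYX1|%:R * c.
  rewrite /PrW (eq_bigr (fun _ => c)); last by move=> y yT; apply: Pc.
  by rewrite sumr_const mulr_natl.
set Ev := (fun y : {ffun 'I_n -> 'I_K} =>
     [exists x2 in C :\ x1, ptype R (zip3 y x1 x2) == ptype R (z ym)]).
have eqF : \sum_(y | Ev y && (y \in F qm)) Pn W x1 y = #|F qm|%:R * c.
  rewrite (eq_bigl (fun y => y \in F qm)) => [|y].
    rewrite (eq_bigr (fun _ => c)); first by rewrite sumr_const mulr_natl.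
    by move=> y; rewrite inE => /andP [yU _]; apply: Pc; apply: UT.
  case yF: (y \in F qm); rewrite ?andbF // andbT.
  move: yF; rewrite inE => /andP [yU /eqP hy].
  have [gyC gyT] := gP y yU.
  apply/exists_inP; exists (g y); first exact: gyC.
  by apply/eqP; exact: (hvec_ptype R (etrans hy qmE')).
have low : #|F qm|%:R * c <= PrW W x1 Ev.
  rewrite /PrW (bigID (fun y => y \in F qm)) /= eqF lerDl.
  by apply: sumr_ge0 => y _; rewrite /Pn; apply: prodr_ge0 => i _; apply: W0.
have natineq : (#|Tcond x1 pYX1| <= 2 * (n + 1) ^ (J ^ 2 * K - 1) * #|F qm|)%N.
  apply: leq_trans Hx1 _; rewrite -mulnA leq_mul2l /=.
  apply: leq_trans UF _; by rewrite leq_mul2r Hb orbT.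
rewrite PT; apply: le_trans low; rewrite mulrA ler_wpM2r //.
rewrite ler_pdivrMl ?ltr0n ?muln_gt0 ?expn_gt0 ?addn1 // -natrM ler_nat.
by move: natineq; rewrite addn1.
Qed.
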